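(* Let $\Gamma$ be a context and $A$ a type. If for all possible-world models $\mathcal{M}$ with a reflexive–transitive frame it is the case that $\mathcal{M}([\![\Gamma]\!],[\![A]\!])$ is inhabited, then there is a term $t$ of type $A$ in context $\Gamma$ of $\mathrm{IS4}_C$.
   Context: Types $A::=\iota\mid A\to B\mid\Box A$; contexts $\Gamma::=\cdot\mid\Gamma,A\mid\Gamma,\mathsf{lock}$ ($\mathsf{lock}$ the context lock). A possible-world model is a frame $(W,R_i,R_m)$ ($R_i$ reflexive transitive; factorization $R_m;R_i\subseteq R_i;R_m$) plus a valuation $V_\iota$ monotone along $R_i$; ''reflexive–transitive frame'' means $R_m$ is also reflexive and transitive. $\mathcal{M}(X,Y)$ is the type of families $\forall w.\,X_w\to Y_w$. Interpretation: $[\![\iota]\!]_w=V_{\iota,w}$, $[\![A\to B]\!]_w=\forall w'.\,w\mathrel{R_i}w'\to[\![A]\!]_{w'}\to[\![B]\!]_{w'}$, $[\![\Box A]\!]_w=\forall w'.\,w\mathrel{R_i}w'\to\forall v.\,w'\mathrel{R_m}v\to[\![A]\!]_v$, $[\![\cdot]\!]_w=\top$, $[\![\Gamma,A]\!]_w=[\![\Gamma]\!]_w\times[\![A]\!]_w$, $[\![\Gamma,\mathsf{lock}]\!]_w=\sum_u[\![\Gamma]\!]_u\times(u\mathrel{R_m}w)$. $\mathrm{IS4}_C$ terms: STLC plus $\mathsf{box}\,t:\Box A$ in $\Gamma$ from $t:A$ in $\Gamma,\mathsf{lock}$, and $\mathsf{unbox}(t,e):A$ in $\Gamma$ from $t:\Box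 A$ in $\Delta$ where $\Gamma$ extends $\Delta$ by any types and locks. *)

(* Defs.v *)
Inductive Ty : Type :=
| iota : Ty
| arr : Ty -> Ty -> Ty
| box : Ty -> Ty.

Inductive Ctx : Type :=
| cnil : Ctx
| cext : Ctx -> Ty -> Ctx
| clock : Ctx -> Ctx.

(** Variables: de Bruijn indices into the lock-free suffix of a context. *)
Inductive Var : Ctx -> Ty -> Type :=
| vze : forall G A, Var (cext G A) A
| vsu : forall G A B, Var G A -> Var (cext G B) A.

Inductive Ext : Ctx -> Ctx -> Type :=
| ext_nil : forall G, Ext G G
| ext_ty : forall D G A, Ext D G -> Ext D (cext G A)
| ext_lock : forall D G, Ext D G -> Ext D (clock G).

Inductive Tm : Ctx -> Ty -> Type :=
| var : forall G A, Var G A -> Tm G A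
| lam : forall G A B, Tm (cext G A) B -> Tm G (arr A B)
| app : forall G A B, Tm G (arr A B) -> Tm G A -> Tm G B
| tbox : forall G A, Tm (clock G) A -> Tm G (box A)
| unbox : forall G D A, Tm D (box A) -> Ext D G -> Tm G A.

Record Model : Type := {
  W : Type;
  Ri : W -> W -> Type;
  Rm : W -> W -> Type;
  Ri_refl : forall w, Ri w w;
  Ri_trans : forall w v u, Ri w v -> Ri v u -> Ri w u;
  factor : forall w v u, Rm w v -> Ri v u -> { w' : W & (Ri w w' * Rm w' u)%type };
  Vi : W -> Type;
  Vi_mono : forall w w', Ri w w' -> Vi w -> Vi w'
}.

Definition RTFrame (M : Model) : Type :=
  ((forall w, Rm M w w) *
   (forall w v u, Rm M w v -> Rm M v u -> Rm M w u))%type.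

Fixpoint tyI (M : Model) (A : Ty) : W M -> Type :=
  match A with
  | iota => fun w => Vi M w
  | arr A B => fun w => forall w', Ri M w w' -> tyI M A w' -> tyI M B w'
  | box A => fun w => forall w', Ri M w w' -> forall v, Rm M w' v -> tyI M A v
  end.

Fixpoint ctxI (M : Model) (G : Ctx) : W M -> Type :=
  match G with
  | cnil => fun _ => unit
  | cext G A => fun w => (ctxI M G w * tyI M A w)%type
  | clock G => fun w => { u : W M & (ctxI M G u * Rm M u w)%type }
  end.

Definition Hom (M : Model) (X Y : W M -> Type) : Type := forall w, X w -> Y w.

(* Main.v *)
Require Import Defs.

Inductive Wk : Ctx -> Ctx -> Type :=
| wk_nil : Wk cnil cnil
| wk_drop : forall G D A, Wk G D -> Wk G (cext D A)
| wk_keep : forall G D A, Wk G D -> Wk (cext G A) (cext D A)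
| wk_keeplock : forall G D, Wk G D -> Wk (clock G) (clock D).

Lemma wk_refl : forall G, Wk G G.
Proof. induction G; [apply wk_nil | apply wk_keep; auto | apply wk_keeplock; auto]. Qed.

Lemma wk_trans : forall H K, Wk H K -> forall G, Wk G H -> Wk G K.
Proof.
  intros H K w2; induction w2; intros G0 w1.
  - exact w1.
  - apply wk_drop; auto.
  - inversion w1; subst.
    + apply wk_drop; auto.
    + apply wk_keep; auto.
  - inversion w1; subst. apply wk_keeplock; auto.
Qed.

Lemma ext_refl : forall G, Ext G G.
Proof. intros; constructor. Qed.

Lemma ext_trans : forall D G, Ext D G -> forall K, Ext G K -> Ext D K.
Proof.
  intros D G e1 K e2; induction e2.
  - exact e1.
  - apply ext_ty; auto.
  - apply ext_lock; auto.
Qed.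

Lemma factor_wk : forall G G', Wk G G' -> forall D, Ext D G ->
  { D' : Ctx & (Wk D D' * Ext D' G')%type }.
Proof.
  intros G G' w; induction w; intros D0 e.
  - exists D0; split; [apply wk_refl | exact e].
  - destruct (IHw D0 e) as [D' [w' e']]. exists D'; split; auto. apply ext_ty; auto.
  - inversion e; subst.
    + exists (cext D A); split; [apply wk_keep; auto | apply ext_nil].
    + match goal with Hx : Ext D0 _ |- _ => rename Hx into X end. destruct (IHw D0 X) as [D' [w' e']]. exists D'; split; auto. apply ext_ty; auto.
  - inversion e; subst.
    + exists (clock D); split; [apply wk_keeplock; auto | apply ext_nil].
    + match goal with Hx : Ext D0 _ |- _ => rename Hx into X end. destruct (IHw D0 X) as [D' [w' e']]. exists D'; split; auto. apply ext_lock; auto.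
Qed.

Lemma ren_var : forall G D, Wk G D -> forall A, Var G A -> Var D A.
Proof.
  intros G D w; induction w; intros A0 v.
  - exact v.
  - apply vsu; auto.
  - inversion v; subst.
    + apply vze.
    + apply vsu; auto.
  - inversion v.
Qed.

Lemma ren_tm : forall G A, Tm G A -> forall D, Wk G D -> Tm D A.
Proof.
  intros G A t; induction t; intros D0 w.
  - apply var. eapply ren_var; eauto.
  - apply lam. apply IHt. apply wk_keep; auto.
  - eapply app; eauto.
  - apply tbox. apply IHt. apply wk_keeplock; auto.
  - destruct (factor_wk _ _ w _ e) as [D' [w' e']].
    eapply unbox; [apply IHt; exact w' | exact e'].
Qed.

Definition CM : Model := {|
  W := Ctx;
  Ri := Wk;
  Rm := Ext;
  Ri_refl := wk_refl;
  Ri_trans := fun w v u r1 r2 => wk_trans v u r2 w r1;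
  factor := fun w v u e r => factor_wk v u r w e;
  Vi := fun G => Tm G iota;
  Vi_mono := fun w w' r t => ren_tm w iota t w' r
|}.

Lemma CM_rt : RTFrame CM.
Proof. split; simpl. apply ext_refl. intros w v u e1 e2; eapply ext_trans; eauto. Qed.

Lemma ty_mono : forall (M : Model) A w w', Ri M w w' -> tyI M A w -> tyI M A w'.
Proof.
  intros M A; destruct A; simpl; intros w w' r x.
  - eapply Vi_mono; eauto.
  - intros w'' r' a. apply (x w''); auto. eapply Ri_trans; eauto.
  - intros w'' r' v e. apply (x w'' (Ri_trans M _ _ _ r r') v e).
Qed.

Lemma ctx_mono : forall (M : Model) G w w', Ri M w w' -> ctxI M G w -> ctxI M G w'.
Proof.
  intros M G; induction G; simpl; intros w w' r x.
  - exact tt.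
  - destruct x as [g a]; split; [eapply IHG; eauto | eapply ty_mono; eauto].
  - destruct x as [u [g e]].
    destruct (factor M _ _ _ e r) as [u' [r' e']].
    exists u'; split; [eapply IHG; eauto | exact e'].
Qed.

Lemma reflect_reify : forall A G,
  (Tm G A -> tyI CM A G) * (tyI CM A G -> Tm G A).
Proof.
  induction A; intros G; simpl.
  - split; auto.
  - split.
    + intros t w' r a. apply (fst (IHA2 w')).
      eapply app; [exact (ren_tm _ _ t _ r) | exact (snd (IHA1 w') a)].
    + intros f. apply lam. apply (snd (IHA2 _)).
      apply f. apply wk_drop, wk_refl. apply (fst (IHA1 _)). apply var, vze.
  - split.
    + intros t w' r v e. apply (fst (IHA v)).
      eapply unbox; [exact (ren_tm _ _ t _ r) | exact e].
    + intros f. apply tbox. apply (snd (IHA _)).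
      apply (f G (wk_refl G) (clock G)). apply ext_lock, ext_nil.
Qed.

Lemma env_id : forall G, ctxI CM G G.
Proof.
  induction G; simpl.
  - exact tt.
  - split.
    + apply (ctx_mono CM G G (cext G t)); [apply wk_drop, wk_refl | exact IHG].
    + apply (fst (reflect_reify t _)). apply var, vze.
  - exists G; split; [exact IHG | apply ext_lock, ext_nil].
Qed.

Theorem theorem8 (G : Ctx) (A : Ty) :
  (forall M : Model, RTFrame M -> inhabited (Hom M (ctxI M G) (tyI M A))) ->
  inhabited (Tm G A).
Proof.
  intros H. destruct (H CM CM_rt) as [f]. constructor.
  exact (snd (reflect_reify A G) (f G (env_id G))).
Qed.

Print Assumptions theorem8.
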